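(* Let $I\subseteq\mathbb{R}$ be an open interval (possibly unbounded), $\Sigma=I\times\mathbb{R}$, and let $F\in C^\omega(\Sigma,\mathbb{R}^2)$ (real analytic) be a non-singular map of the form $F(x,y)=\big(p_2(x)y^2+p_1(x)y+p_0(x),\,q_2(x)y^2+q_1(x)y+q_0(x)\big)$. If either $p_2(x)\neq0$ for all $x\in I$ or $q_2(x)\neq0$ for all $x\in I$, then $F$ is injective.
   Context: For $F=(P,Q)$, $d_F=P_xQ_y-P_yQ_x$ is the Jacobian determinant; $F$ is non-singular if $d_F(x,y)\neq0$ for all $(x,y)\in\Sigma$. *)

(* Defs.v *)
From Stdlib Require Import Reals.
From Coquelicot Require Import Coquelicot.
Open Scope R_scope.

Definition in_interval (a b : Rbar) (x : R) : Prop :=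
  Rbar_lt a x /\ Rbar_lt x b.

Definition real_analytic_on (a b : Rbar) (f : R -> R) : Prop :=
  forall x0, in_interval a b x0 ->
    exists (c : nat -> R) (r : R), 0 < r /\
      forall x, Rabs (x - x0) < r -> is_pseries c (x - x0) (f x).

Definition quad_comp (c2 c1 c0 : R -> R) (x y : R) : R :=
  c2 x * y ^ 2 + c1 x * y + c0 x.

Definition jacobian_det (P Q : R -> R -> R) (x y : R) : R :=
  Derive (fun t => P t y) x * Derive (fun t => Q x t) y
  - Derive (fun t => P x t) y * Derive (fun t => Q t y) x.

Definition nonsingular_on (a b : Rbar) (P Q : R -> R -> R) : Prop :=
  forall x y, in_interval a b x -> jacobian_det P Q x y <> 0.

Definition injective_on (a b : Rbar) (P Q : R -> R -> R) : Prop :=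
  forall x1 y1 x2 y2, in_interval a b x1 -> in_interval a b x2 ->
    P x1 y1 = P x2 y2 -> Q x1 y1 = Q x2 y2 -> x1 = x2 /\ y1 = y2.

(* Main.v *)
Require Import Defs.
From Stdlib Require Import Reals Lra.
From Coquelicot Require Import Coquelicot.
Open Scope R_scope.

Lemma analytic_ex_derive a b f x : real_analytic_on a b f -> in_interval a b x -> ex_derive f x.
Proof.
  intros Ha Hx. destruct (Ha x Hx) as (c & r & Hr & Hs).
  assert (Hrad : Rbar_lt (Rabs 0) (CV_radius c)).
  { rewrite Rabs_R0.
    destruct (Rbar_lt_le_dec 0 (CV_radius c)) as [H|H]; [exact H|].
    exfalso. apply (CV_disk_outside c (r/2)).
    - assert (E : CV_radius c = Finite 0).
      { generalize (CV_radius_ge_0 c). destruct (CV_radius c); simpl in *; try easy.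
        intros; f_equal; lra. }
      rewrite E; simpl. rewrite Rabs_pos_eq; lra.
    - apply ex_series_lim_0.
      apply ex_series_ext with (a := fun k => scal (pow_n (r/2) k) (c k)).
      { intros n. rewrite pow_n_pow. unfold scal; simpl. unfold mult; simpl. ring. }
      exists (f (x + r/2)).
      assert (Hs' := Hs (x + r/2)). replace (x + r/2 - x) with (r/2) in Hs' by ring.
      apply Hs'. rewrite Rabs_pos_eq; lra. }
  assert (HD := is_derive_PSeries c 0 Hrad).
  exists (PSeries (PS_derive c) 0).
  apply is_derive_ext_loc with (f := fun t => PSeries c (t - x)).
  - exists (mkposreal r Hr). intros t Ht. simpl.
    apply is_pseries_unique. apply Hs. exact Ht.
  - replace (PSeries (PS_derive c) 0) with (1 * PSeries (PS_derive c) 0) by ring.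
    apply (is_derive_comp (PSeries c) (fun t => t - x)).
    + replace (x - x) with 0 by ring. exact HD.
    + auto_derive; auto; ring.
Qed.

Lemma interval_convex a b u w z : in_interval a b u -> in_interval a b w ->
  Rmin u w <= z <= Rmax u w -> in_interval a b z.
Proof.
  intros [Hu1 Hu2] [Hw1 Hw2] Hz.
  assert (Hz' : (u <= z <= w) \/ (w <= z <= u)).
  { destruct (Rle_dec u w).
    - rewrite Rmin_left, Rmax_right in Hz by lra. left; lra.
    - rewrite Rmin_right, Rmax_left in Hz by lra. right; lra. }
  split; destruct a, b; simpl in *; try easy; lra.
Qed.

Lemma mvt_I a b (g dg : R -> R) u w :
  (forall x, in_interval a b x -> is_derive g x (dg x)) ->
  in_interval a b u -> in_interval a b w ->
  exists z, in_interval a b z /\ g w - g u = dg z * (w - u).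
Proof.
  intros Hd Hu Hw.
  destruct (MVT_gen g u w dg) as (z & Hz & E).
  - intros x Hx. apply Hd. apply (interval_convex a b u w); auto; lra.
  - intros x Hx. apply continuity_pt_filterlim. apply (ex_derive_continuous (K:=R_AbsRing) (V:=R_NormedModule) g).
    eexists. apply Hd. apply (interval_convex a b u w); auto.
  - exists z. split; auto. apply (interval_convex a b u w); auto.
Qed.

Lemma cubic_root A B C D : A <> 0 -> exists y, A*y^3 + B*y^2 + C*y + D = 0.
Proof.
  revert B C D.
  assert (Hpos : forall A B C D, 0 < A -> exists y, A*y^3 + B*y^2 + C*y + D = 0).
  { intros A0 B C D HA.
    set (K := Rabs B + Rabs C + Rabs D).
    assert (HK : 0 <= K) by (unfold K; generalize (Rabs_pos B) (Rabs_pos C) (Rabs_pos D); lra).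
    set (M := 1 + K / A0).
    assert (HM1 : 1 <= M). { unfold M. assert (0 <= K/A0) by (apply Rdiv_le_0_compat; lra). lra. }
    assert (HAM : A0 * M = A0 + K) by (unfold M; field; lra).
    set (f := fun y => A0*y^3 + B*y^2 + C*y + D).
    assert (HB := Rle_abs B). assert (HB' := Rle_abs (-B)). rewrite Rabs_Ropp in HB'.
    assert (HC := Rle_abs C). assert (HC' := Rle_abs (-C)). rewrite Rabs_Ropp in HC'.
    assert (HD := Rle_abs D). assert (HD' := Rle_abs (-D)). rewrite Rabs_Ropp in HD'.
    assert (HM2 : M <= M^2) by nra.
    assert (Hf1 : 0 < f M).
    { unfold f. assert (C*M >= - Rabs C * M^2) by nra.
      assert (D >= - Rabs D * M^2) by nra.
      assert (B*M^2 >= - Rabs B * M^2) by nra.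
      assert (A0*M^3 = (A0 + K) * M^2) by (rewrite <- HAM; ring).
      unfold K in *. nra. }
    assert (Hf2 : f (-M) < 0).
    { unfold f. assert (C*(-M) <= Rabs C * M^2) by nra.
      assert (D <= Rabs D * M^2) by nra.
      assert (B*(-M)^2 <= Rabs B * M^2) by nra.
      assert (A0*(-M)^3 = - (A0 + K) * M^2) by (rewrite <- HAM; ring).
      unfold K in *. nra. }
    destruct (IVT f (-M) M) as (z & _ & Hz).
    - intros x. unfold f. reg.
    - lra.
    - exact Hf2.
    - exact Hf1.
    - exists z. exact Hz. }
  intros B C D HA.
  destruct (Rlt_or_le 0 A) as [H|H].
  - apply Hpos; auto.
  - destruct (Hpos (-A) (-B) (-C) (-D)) as [y Hy]. lra.
    exists y. lra.
Qed.

Ltac fixeta := repeat match goal with |- context [Derive (fun t => ?f t) ?x] => change (Derive (fun t => f t) x) with (Derive f x) end.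

Lemma jac_formula p2 p1 p0 q2 q1 q0 x y :
  ex_derive p2 x -> ex_derive p1 x -> ex_derive p0 x ->
  ex_derive q2 x -> ex_derive q1 x -> ex_derive q0 x ->
  jacobian_det (quad_comp p2 p1 p0) (quad_comp q2 q1 q0) x y =
  (Derive p2 x * y^2 + Derive p1 x * y + Derive p0 x) * (2 * q2 x * y + q1 x)
  - (2 * p2 x * y + p1 x) * (Derive q2 x * y^2 + Derive q1 x * y + Derive q0 x).
Proof.
  intros H1 H2 H3 H4 H5 H6. unfold jacobian_det, quad_comp.
  replace (Derive (fun t => p2 t * y^2 + p1 t * y + p0 t) x) with
     (Derive p2 x * y^2 + Derive p1 x * y + Derive p0 x)
    by (symmetry; apply is_derive_unique; auto_derive; fixeta; repeat split; auto; ring).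
  replace (Derive (fun t => q2 t * y^2 + q1 t * y + q0 t) x) with
     (Derive q2 x * y^2 + Derive q1 x * y + Derive q0 x)
    by (symmetry; apply is_derive_unique; auto_derive; fixeta; repeat split; auto; ring).
  replace (Derive (fun t => p2 x * t^2 + p1 x * t + p0 x) y) with
     (2 * p2 x * y + p1 x)
    by (symmetry; apply is_derive_unique; auto_derive; fixeta; repeat split; auto; ring).
  replace (Derive (fun t => q2 x * t^2 + q1 x * t + q0 x) y) with
     (2 * q2 x * y + q1 x)
    by (symmetry; apply is_derive_unique; auto_derive; fixeta; repeat split; auto; ring).
  ring.
Qed.

Section Main.
Variables (a b : Rbar) (p2 p1 p0 q2 q1 q0 : R -> R).
Hypothesis dp2 : forall x, in_interval a b x -> ex_derive p2 x.
Hypothesis dp1 : forall x, in_interval a b x -> ex_derive p1 x.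
Hypothesis dp0 : forall x, in_interval a b x -> ex_derive p0 x.
Hypothesis dq2 : forall x, in_interval a b x -> ex_derive q2 x.
Hypothesis dq1 : forall x, in_interval a b x -> ex_derive q1 x.
Hypothesis dq0 : forall x, in_interval a b x -> ex_derive q0 x.
Hypothesis Hns : nonsingular_on a b (quad_comp p2 p1 p0) (quad_comp q2 q1 q0).
Hypothesis Hp2 : forall x, in_interval a b x -> p2 x <> 0.

Lemma lead_zero x : in_interval a b x -> Derive p2 x * q2 x = p2 x * Derive q2 x.
Proof.
  intros Hx. destruct (Req_dec (Derive p2 x * q2 x) (p2 x * Derive q2 x)) as [E|E]; auto.
  exfalso.
  destruct (cubic_root (2 * (Derive p2 x * q2 x - p2 x * Derive q2 x))
     (2 * Derive p1 x * q2 x + Derive p2 x * q1 x - 2 * p2 x * Derive q1 x - p1 x * Derive q2 x)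
     (2 * Derive p0 x * q2 x + Derive p1 x * q1 x - 2 * p2 x * Derive q0 x - p1 x * Derive q1 x)
     (Derive p0 x * q1 x - p1 x * Derive q0 x)) as [y Hy].
  { intro H. apply E. lra. }
  apply (Hns x y Hx). rewrite jac_formula; auto.
  rewrite <- Hy. ring.
Qed.

Lemma ratio_const u w : in_interval a b u -> in_interval a b w ->
  q2 u / p2 u = q2 w / p2 w.
Proof.
  intros Hu Hw.
  destruct (mvt_I a b (fun x => q2 x / p2 x) (fun _ => 0) u w) as (z & Hz & E); auto.
  - intros x Hx. apply is_derive_ext with (f := fun t => q2 t / p2 t); [reflexivity|].
    assert (H1 := Derive_correct _ _ (dq2 x Hx)).
    assert (H2 := Derive_correct _ _ (dp2 x Hx)).
    replace 0 with ((Derive q2 x * p2 x - q2 x * Derive p2 x) / (p2 x)^2).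
    + apply (is_derive_ext (fun t => q2 t * / p2 t)); [reflexivity|].
      replace ((Derive q2 x * p2 x - q2 x * Derive p2 x) / (p2 x)^2) with
        (Derive q2 x * / p2 x + q2 x * (- Derive p2 x / (p2 x)^2)).
      * apply (is_derive_mult (fun t => q2 t) (fun t => / p2 t)); auto.
        -- apply (is_derive_inv p2 x (Derive p2 x)); auto.
        -- intros; simpl. unfold mult; simpl. ring.
      * field. auto.
    + assert (HL := lead_zero x Hx). assert (Hp := Hp2 x Hx).
      field_simplify; auto. rewrite (Rmult_comm (q2 x)), HL. field. auto.
  - lra.
Qed.


Lemma main_inj : injective_on a b (quad_comp p2 p1 p0) (quad_comp q2 q1 q0).
Proof.
  intros x1 y1 x2 y2 Hx1 Hx2 EP EQ.
  set (c := q2 x1 / p2 x1).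
  assert (Hq2 : forall x, in_interval a b x -> q2 x = c * p2 x).
  { intros x Hx. unfold c. rewrite (ratio_const x1 x); auto. field. auto. }
  assert (HDq2 : forall x, in_interval a b x -> Derive q2 x = c * Derive p2 x).
  { intros x Hx. assert (HL := lead_zero x Hx). rewrite Hq2 in HL by auto.
    assert (Hp := Hp2 x Hx).
    apply (Rmult_eq_reg_l (p2 x)); auto. rewrite <- HL. ring. }
  set (r1 := fun x => q1 x - c * p1 x).
  set (r0 := fun x => q0 x - c * p0 x).
  assert (Hr1 : forall x, in_interval a b x -> r1 x <> 0).
  { intros x Hx Hr. assert (Hp := Hp2 x Hx).
    apply (Hns x (- p1 x / (2 * p2 x)) Hx). rewrite jac_formula; auto.
    rewrite Hq2 by auto. unfold r1 in Hr.
    replace (2 * p2 x * (- p1 x / (2 * p2 x)) + p1 x) with 0 by (field; auto).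
    replace (2 * (c * p2 x) * (- p1 x / (2 * p2 x)) + q1 x) with 0.
    ring. replace (q1 x) with (c * p1 x) by lra. field. auto. }
  unfold quad_comp in EP, EQ.
  rewrite (Hq2 x1 Hx1), (Hq2 x2 Hx2) in EQ.
  assert (ER : r1 x1 * y1 + r0 x1 = r1 x2 * y2 + r0 x2).
  { unfold r1, r0. transitivity
      ((c * p2 x1 * y1 ^ 2 + q1 x1 * y1 + q0 x1) - c * (p2 x1 * y1 ^ 2 + p1 x1 * y1 + p0 x1)).
    ring. rewrite EQ, EP. ring. }
  set (v := r1 x1 * y1 + r0 x1).
  set (Y := fun x => (v - r0 x) / r1 x).
  set (g := fun x => quad_comp p2 p1 p0 x (Y x)).
  assert (HY1 : Y x1 = y1). { unfold Y, v. field. auto. }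
  assert (HY2 : Y x2 = y2). { unfold Y, v. rewrite ER. field. auto. }
  destruct (mvt_I a b g (fun x => jacobian_det (quad_comp p2 p1 p0) (quad_comp q2 q1 q0) x (Y x) / r1 x) x1 x2)
    as (z & Hz & E); auto.
  - intros x Hx. rewrite jac_formula; auto.
    rewrite (Hq2 x Hx), (HDq2 x Hx).
    assert (Hr := Hr1 x Hx).
    unfold g, Y, quad_comp, r1, r0 in *.
    auto_derive.
    + fixeta. repeat split; auto.
    + fixeta. field. auto.
  - assert (Hgx : g x2 - g x1 = 0).
    { unfold g. rewrite HY1, HY2. unfold quad_comp. lra. }
    rewrite Hgx in E.
    assert (Hx12 : x2 - x1 = 0).
    { destruct (Req_dec (x2 - x1) 0) as [H|H]; auto. exfalso.
      assert (Hj := Hns z (Y z) Hz). assert (Hr := Hr1 z Hz).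
      symmetry in E. apply Rmult_integral in E. destruct E as [E|E]; [|contradiction].
      apply Hj. unfold Rdiv in E. apply Rmult_integral in E. destruct E as [E|E]; auto.
      exfalso. apply (Rinv_neq_0_compat _ Hr). exact E. }
    assert (x1 = x2) by lra. subst x2. split; auto.
    rewrite <- HY1, <- HY2. reflexivity.
Qed.
End Main.

Theorem corollary1 (a b : Rbar) (p2 p1 p0 q2 q1 q0 : R -> R) :
  Rbar_lt a b ->
  real_analytic_on a b p2 -> real_analytic_on a b p1 -> real_analytic_on a b p0 ->
  real_analytic_on a b q2 -> real_analytic_on a b q1 -> real_analytic_on a b q0 ->
  nonsingular_on a b (quad_comp p2 p1 p0) (quad_comp q2 q1 q0) ->
  ((forall x, in_interval a b x -> p2 x <> 0) \/
   (forall x, in_interval a b x -> q2 x <> 0)) ->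
  injective_on a b (quad_comp p2 p1 p0) (quad_comp q2 q1 q0).
Proof.
  intros _ A2 A1 A0 B2 B1 B0 Hns [H|H].
  - apply main_inj; auto; intros x Hx; eapply analytic_ex_derive; eauto.
  - intros x1 y1 x2 y2 Hx1 Hx2 EP EQ.
    apply (main_inj a b q2 q1 q0 p2 p1 p0); auto;
      try (intros x Hx; eapply analytic_ex_derive; eauto).
    intros x y Hx Hj. apply (Hns x y Hx).
    unfold jacobian_det in *. lra.
Qed.
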